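(* Let $r\geq 2$ be a fixed integer, let $V$ be a set of $n$ vertices, and let $d=d(n)$ satisfy $d=o(n^{r-1})$. Suppose $H,H'\subseteq\binom{V}{r}$ are two edge-disjoint $r$-graphs on $V$ such that $|H|=o(nd)$ and $\Delta(H')=o(n^{r-1})$. Then, for all $e\in\binom{V}{r}\setminus(H\cup H')$, \[\mathbb{P}\left[e\in G_{n,d}^{(r)}\mid\mathcal{G}_{n,d,H,H'}^{(r)}\right]\leq(r-1)!\frac{d}{n^{r-1}}\left(1+O\left(\frac{1}{n}+\frac{d}{n^{r-1}}+\frac{|H|}{nd}+\frac{\Delta(H')}{n^{r-1}}\right)\right).\]
   Context: An $r$-graph on $V$ is a set of $r$-element subsets (edges) of $V$; $|H|$ is its number of edges, $\deg_H(v)$ the number of edges containing $v$, and $\Delta(H)$ the maximum degree. $\mathcal{G}_{n,d}^{(r)}$ is the set of all $d$-regular $r$-graphs on the $n$-vertex set $V$ (it is assumed throughout that $r\mid nd$), and $G_{n,d}^{(r)}$ is chosen uniformly at random from it. For $r$-graphs $H,H'$ on $V$, $\mathcal{G}_{n,d,H,H'}^{(r)}$ is the set of $G\in\mathcal{G}_{n,d}^{(r)}$ with $H\subseteq G$ and $H'\cap G=\varnothing$; it is also used to denote the event $G_{n,d}^{(r)}\in\mathcal{G}_{n,d,H,H'}^{(r)}$. Asymptotics are as $n\to\infty$; the implicit constant in $O(\cdot)$ depends only on $r$. *)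

(* Defs.v *)
From mathcomp Require Import all_boot all_order all_algebra.
Set Implicit Arguments. Unset Strict Implicit. Unset Printing Implicit Defensive.
Import Order.TTheory GRing.Theory Num.Theory.

Definition is_rgraph (r n : nat) (H : {set {set 'I_n}}) : bool :=
  [forall e in H, #|e| == r].

Definition deg (n : nat) (H : {set {set 'I_n}}) (v : 'I_n) : nat :=
  #|[set e in H | v \in e]|.

Definition maxdeg (n : nat) (H : {set {set 'I_n}}) : nat :=
  \max_(v : 'I_n) deg H v.

Definition regular_rgraph (r d n : nat) (G : {set {set 'I_n}}) : bool :=
  is_rgraph r G && [forall v : 'I_n, deg G v == d].

Definition GndHH (r d n : nat) (H H' : {set {set 'I_n}}) : {set {set {set 'I_n}}} :=
  [set G : {set {set 'I_n}} | [&& regular_rgraph r d G, H \subset G & [disjoint H' & G]]].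

(* P[e in G^{(r)}_{n,d} | G^{(r)}_{n,d,H,H'}] for the uniform distribution,
   as a ratio of counts (convention x/0 = 0 if the conditioning event is empty) *)
Definition cond_prob (r d n : nat) (H H' : {set {set 'I_n}}) (e : {set 'I_n}) : rat :=
  (#|[set G in GndHH r d H H' | e \in G]|%:R / #|GndHH r d H H'|%:R)%R.

Definition littleo (f g : nat -> rat) : Prop :=
  forall eps : rat, (0 < eps)%R -> exists N : nat, forall n, (N <= n)%N -> (f n <= eps * g n)%R.

(* Main.v *)
Require Import Defs.
From mathcomp Require Import all_boot all_order all_algebra zify ring lra.
Set Implicit Arguments. Unset Strict Implicit. Unset Printing Implicit Defensive.

Section Gen.
Variable T : finType.

Definition im k (f : {ffun 'I_k -> T}) : {set T} := [set f j | j : 'I_k].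

Lemma card_bigcup_le (I : finType) (P : pred I) (A : I -> {set T}) :
  #|\bigcup_(i | P i) A i| <= \sum_(i | P i) #|A i|.
Proof.
elim/big_rec2: _ => [|i X s _ hX]; first by rewrite cards0. apply: leq_trans (leq_add (leqnn _) hX).
by rewrite cardsU leq_subr.
Qed.

Lemma card_inj_eq k (S : {set T}) : #|S| = k ->
  #|[set f : {ffun 'I_k -> T} | injectiveb f && (im f == S)]| = k`!.
Proof.
move=> hS.
have -> : [set f : {ffun 'I_k -> T} | injectiveb f && (im f == S)] =
          [set f in ffun_on (mem S) | injectiveb f].
  apply/setP=> f; rewrite !inE.
  case fi: (injectiveb f) => //=; rewrite ?andbF ?andbT //.
  apply/eqP/ffun_onP => [<- x | hf].
    by apply/imsetP; exists x.
  apply/eqP; rewrite eqEcard; apply/andP; split.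
    by apply/subsetP=> y /imsetP [x _ ->]; exact: hf.
  rewrite hS /im card_imset; last by apply/injectiveP.
  by rewrite card_ord.
by rewrite card_inj_ffuns_on card_ord hS ffactnn.
Qed.

Lemma card_inj_neq k (S : {set T}) : #|S| != k ->
  #|[set f : {ffun 'I_k -> T} | injectiveb f && (im f == S)]| = 0.
Proof.
move=> hS; apply/eqP; rewrite cards_eq0; apply/eqP/setP=> f; rewrite !inE.
apply/negbTE/negP=> /andP [/injectiveP fi /eqP hf]; move: hS.
by rewrite -hf /im card_imset // card_ord eqxx.
Qed.

Lemma card_inj_in k (K : {set {set T}}) :
  #|[set f : {ffun 'I_k -> T} | injectiveb f && (im f \in K)]| =
  \sum_(S in K) #|[set f : {ffun 'I_k -> T} | injectiveb f && (im f == S)]|.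
Proof.
rewrite -sum1_card (partition_big (@im k) (mem K)); last first.
  by move=> f; rewrite inE => /andP [].
apply: eq_bigr => S SK; rewrite -sum1_card; apply: eq_bigl => f.
rewrite !inE; case: (injectiveb f) => //=.
by case: eqP => [->|]; rewrite ?andbF // andbT.
Qed.

Lemma card_inj_le k (K : {set {set T}}) :
  #|[set f : {ffun 'I_k -> T} | injectiveb f && (im f \in K)]| <= #|K| * k`!.
Proof.
rewrite card_inj_in -sum_nat_const; apply: leq_sum => S _.
case: (eqVneq #|S| k) => h; first by rewrite card_inj_eq.
by rewrite card_inj_neq.
Qed.

Lemma card_inj_exact k (K : {set {set T}}) : (forall S, S \in K -> #|S| = k) ->
  #|[set f : {ffun 'I_k -> T} | injectiveb f && (im f \in K)]| = #|K| * k`!.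
Proof.
move=> hK; rewrite card_inj_in -sum_nat_const; apply: eq_bigr => S SK.
by rewrite card_inj_eq // hK.
Qed.

Definition fam (I : finType) (U : finType) (X : I -> {set U}) : {set {ffun I -> U}} :=
  [set c : {ffun I -> U} | [forall i, c i \in X i]].

Lemma card_fam (I U : finType) (X : I -> {set U}) : #|fam X| = \prod_i #|X i|.
Proof.
have -> : #|fam X| = #|(family (fun i => mem (X i)) : simpl_pred {ffun I -> U})|.
  by apply: eq_card => c; rewrite inE; apply/forallP/familyP.
rewrite card_family.
by rewrite /image_mem foldrE big_map big_enum.
Qed.

End Gen.

Section Deg.
Variable n : nat.

Lemma deg_sum (G : {set {set 'I_n}}) : \sum_w deg G w = \sum_(S in G) #|S|.
Proof.
have -> : \sum_w deg G w = \sum_w \sum_(S in G) (w \in S : nat).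
  apply: eq_bigr => w _; rewrite /deg -sum1_card big_mkcond /= [RHS]big_mkcond /=.
  by apply: eq_bigr => S _; rewrite !inE; case: (S \in G); case: (w \in S).
rewrite exchange_big /=; apply: eq_bigr => S _.
by rewrite -sum1_card [RHS]big_mkcond /=.
Qed.

Lemma regular_card r d (G : {set {set 'I_n}}) : regular_rgraph r d G -> #|G| * r = n * d.
Proof.
case/andP=> /forallP hr /forallP hd.
have : \sum_w deg G w = \sum_(S in G) #|S| := deg_sum G.
have E1 : \sum_w deg G w = \sum_(w : 'I_n) d by apply: eq_bigr => w _; apply/eqP/hd.
have E2 : \sum_(S in G) #|S| = \sum_(S in G) r.
  by apply: eq_bigr => S SG; apply/eqP; move: (hr S); rewrite SG.
by rewrite E1 E2 !sum_nat_const card_ord mulnC => <-.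
Qed.

Lemma deg_U (X Y : {set {set 'I_n}}) w : [disjoint X & Y] ->
  deg (X :|: Y) w = deg X w + deg Y w.
Proof.
move=> dXY; rewrite /deg.
have -> : [set e in X :|: Y | w \in e] = [set e in X | w \in e] :|: [set e in Y | w \in e].
  by apply/setP=> S; rewrite !inE andb_orl.
rewrite cardsU; have -> : [set e in X | w \in e] :&: [set e in Y | w \in e] = set0.
  apply/setP=> S; rewrite !inE; apply/negbTE; apply/negP=> /andP[/andP[SX _] /andP[SY _]].
  by move/disjoint_setI0: dXY => /setP /(_ S); rewrite !inE SX SY.
by rewrite cards0 subn0.
Qed.

End Deg.

Lemma card_unique (T : finType) (X : {set T}) :
  (forall x y, x \in X -> y \in X -> x = y) -> #|X| = (X != set0).
Proof.
move=> hX; case: (set_0Vmem X) => [->|[x xX]]; first by rewrite cards0 eqxx.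
have -> : X = [set x] by apply/setP=> y; rewrite inE; apply/idP/eqP => [yX|->//]; exact: hX.
by rewrite cards1 -cards_eq0 cards1.
Qed.

Section Switch.
Variables (n m d : nat) (H H' : {set {set 'I_n}}) (e : {set 'I_n}) (v : {ffun 'I_m.+1 -> 'I_n}).
Hypothesis vinj : injective v.
Hypothesis ev : im v = e.
Hypothesis eH : e \notin H.

Definition Rg (G : {set {set 'I_n}}) :=
  [set f : {ffun 'I_m.+1 -> 'I_n} | injectiveb f && (im f \in G)].
Definition rowset (c : {ffun 'I_m -> {ffun 'I_m.+1 -> 'I_n}}) i := im (c i).
Definition gcol (c : {ffun 'I_m -> {ffun 'I_m.+1 -> 'I_n}}) j := v j |: [set c i j | i : 'I_m].
Definition Rem (c : {ffun 'I_m -> {ffun 'I_m.+1 -> 'I_n}}) := e |: [set rowset c i | i : 'I_m].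
Definition Add (c : {ffun 'I_m -> {ffun 'I_m.+1 -> 'I_n}}) := [set gcol c j | j : 'I_m.+1].
Definition sw (G : {set {set 'I_n}}) (c : {ffun 'I_m -> {ffun 'I_m.+1 -> 'I_n}}) := (G :\: Rem c) :|: Add c.
Definition valid (G : {set {set 'I_n}}) (c : {ffun 'I_m -> {ffun 'I_m.+1 -> 'I_n}}) :=
  [forall i, [&& c i \in Rg G, rowset c i \notin H & [disjoint rowset c i & e]]] &&
  [forall i, forall i', (i != i') ==> [disjoint rowset c i & rowset c i']] &&
  [forall j, gcol c j \notin G :|: H'].

Variables (G : {set {set 'I_n}}) (c : {ffun 'I_m -> {ffun 'I_m.+1 -> 'I_n}}).
Hypothesis GA : G \in GndHH m.+1 d H H'.
Hypothesis eG : e \in G.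
Hypothesis vc : valid G c.

Lemma v_in_e j : v j \in e.
Proof. by rewrite -ev; apply/imsetP; exists j. Qed.

Lemma entry_row i j : c i j \in rowset c i.
Proof. by apply/imsetP; exists j. Qed.

Let vc1 i : [&& c i \in Rg G, rowset c i \notin H & [disjoint rowset c i & e]].
Proof. by case/andP: vc => /andP [/forallP h _] _; exact: h. Qed.
Let vc2 i i' : i != i' -> [disjoint rowset c i & rowset c i'].
Proof. by case/andP: vc => /andP [_ /forallP h] _; move: (h i) => /forallP /(_ i') /implyP. Qed.
Let vc3 j : gcol c j \notin G :|: H'.
Proof. by case/andP: vc => _ /forallP h; exact: h. Qed.

Lemma row_G i : rowset c i \in G.
Proof. by case/and3P: (vc1 i); rewrite inE => /andP []. Qed.
Lemma row_inj i : injective (c i).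
Proof. by case/and3P: (vc1 i); rewrite inE => /andP [/injectiveP]. Qed.
Lemma row_H i : rowset c i \notin H.
Proof. by case/and3P: (vc1 i). Qed.
Lemma row_e i : [disjoint rowset c i & e].
Proof. by case/and3P: (vc1 i). Qed.

Lemma disj_mem (T : finType) (X Y : {set T}) x : [disjoint X & Y] -> x \in X -> x \in Y -> False.
Proof. by move/disjoint_setI0/setP/(_ x); rewrite !inE => h a b; rewrite a b in h. Qed.

Lemma entry_e i j : c i j \notin e.
Proof. by apply/negP => h; apply: (disj_mem (row_e i) (entry_row i j) h). Qed.

Lemma entry_eq i j i' j' : c i j = c i' j' -> i = i' /\ j = j'.
Proof.
move=> h; case: (eqVneq i i') => [ii|nii].
  by subst i'; split => //; exact: row_inj h.
exfalso; apply: (disj_mem (vc2 nii) (entry_row i j)); rewrite h; exact: entry_row.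
Qed.

Lemma gcol_notG j : gcol c j \notin G.
Proof. by move: (vc3 j); rewrite inE negb_or => /andP []. Qed.
Lemma gcol_notH' j : gcol c j \notin H'.
Proof. by move: (vc3 j); rewrite inE negb_or => /andP []. Qed.

Lemma Rem_sub : Rem c \subset G.
Proof.
apply/subsetP=> S; rewrite !inE => /orP [/eqP -> //|/imsetP [i _ ->]]; exact: row_G.
Qed.

Lemma Add_disj : [disjoint Add c & G].
Proof.
rewrite -setI_eq0; apply/eqP/setP=> S; rewrite !inE; apply/negbTE/negP => /andP [/imsetP [j _ ->]].
by apply/negP; exact: gcol_notG.
Qed.

Lemma mem_gcol w j : (w \in gcol c j) = (w == v j) || [exists i, w == c i j].
Proof.
rewrite !inE; congr (_ || _); apply/imsetP/existsP => [[i _ ->]|[i /eqP ->]]; first by exists i.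
by exists i.
Qed.

Definition Uw w := (w \in e) || [exists i, w \in rowset c i].

Lemma degRem w : deg (Rem c) w = Uw w.
Proof.
rewrite /deg card_unique.
  congr (nat_of_bool _); apply/set0Pn/orP => [[S]|].
    rewrite !inE => /andP [/orP [/eqP ->|/imsetP [i _ ->]] wS]; first by left.
    by right; apply/existsP; exists i.
  case=> [we|/existsP [i wi]]; first by exists e; rewrite !inE eqxx.
  by exists (rowset c i); rewrite !inE wi andbT; apply/orP; right; apply/imsetP; exists i.
move=> S1 S2; rewrite !inE => /andP [h1 w1] /andP [h2 w2].
have key : forall S, (S == e) || (S \in [set rowset c i | i : 'I_m]) ->
   S = e \/ exists i, S = rowset c i.
  by move=> S /orP [/eqP ->|/imsetP [i _ ->]]; [left|right; exists i].
case: (key _ h1) => [E1|[i E1]]; case: (key _ h2) => [E2|[i' E2]]; subst S1 S2 => //.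
- by exfalso; apply: (disj_mem (row_e i') w2 w1).
- by exfalso; apply: (disj_mem (row_e i) w1 w2).
case: (eqVneq i i') => [->//|nii].
by exfalso; apply: (disj_mem (vc2 nii) w1 w2).
Qed.

Lemma degAdd w : deg (Add c) w = Uw w.
Proof.
rewrite /deg card_unique.
  congr (nat_of_bool _); apply/set0Pn/orP => [[S]|].
    rewrite !inE => /andP [/imsetP [j _ ->]]; rewrite mem_gcol => /orP [/eqP ->|/existsP [i /eqP ->]].
      by left; apply: v_in_e.
    by right; apply/existsP; exists i; apply: entry_row.
  case=> [we|/existsP [i /imsetP [j _ ->]]].
    move: we; rewrite -ev => /imsetP [j _ ->].
    by exists (gcol c j); rewrite in_set mem_gcol eqxx andbT; apply/imsetP; exists j.
  exists (gcol c j); rewrite in_set mem_gcol; apply/andP; split; first by apply/imsetP; exists j.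
  by apply/orP; right; apply/existsP; exists i.
move=> S1 S2; rewrite !inE => /andP [/imsetP [j1 _ ->] w1] /andP [/imsetP [j2 _ ->] w2].
congr (gcol c _).
move: w1 w2; rewrite !mem_gcol => /orP [/eqP ->|/existsP [i1 /eqP ->]] /orP [/eqP|/existsP [i2 /eqP]].
- by move/vinj.
- by move=> h; exfalso; move: (entry_e i2 j2); rewrite -h v_in_e.
- by move=> h; exfalso; move: (entry_e i1 j1); rewrite h v_in_e.
by case/entry_eq.
Qed.


Lemma disj_of (T : finType) (X Y : {set T}) : (forall x, x \in X -> x \in Y -> False) -> [disjoint X & Y].
Proof.
move=> h; rewrite -setI_eq0; apply/eqP/setP=> x; rewrite !inE.
by apply/negbTE/negP => /andP [a b]; apply: (h x a b).
Qed.

Lemma G_regular : regular_rgraph m.+1 d G.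
Proof. by move: GA; rewrite inE => /and3P []. Qed.
Lemma HG : H \subset G.
Proof. by move: GA; rewrite inE => /and3P []. Qed.
Lemma H'G : [disjoint H' & G].
Proof. by move: GA; rewrite inE => /and3P []. Qed.

Lemma card_gcol j : #|gcol c j| = m.+1.
Proof.
rewrite /gcol cardsU1 card_imset; last by move=> i i' /entry_eq [].
rewrite card_ord; have -> : v j \notin [set c i j | i : 'I_m] => //.
apply/negP => /imsetP [i _ h]; move: (entry_e i j); rewrite -h v_in_e //.
Qed.

Lemma deg_sw w : deg (sw G c) w = deg G w.
Proof.
have d1 : [disjoint G :\: Rem c & Add c].
  apply: disj_of => S; rewrite !inE => /andP [_ SG] SA.
  by apply: (disj_mem Add_disj SA SG).
have d2 : [disjoint G :\: Rem c & Rem c].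
  by apply: disj_of => S; rewrite !inE => /andP [/negP h _] SR; apply: h.
have eG' : G = (G :\: Rem c) :|: Rem c.
  apply/setP=> S; rewrite in_setU in_setD; case SR: (S \in Rem c); rewrite ?orbT ?orbF //=.
  by move/subsetP: Rem_sub => /(_ S SR) ->.
by rewrite /sw deg_U // [in RHS]eG' deg_U // degRem degAdd.
Qed.

Lemma sw_in : sw G c \in GndHH m.+1 d H H'.
Proof.
case/andP: G_regular => /forallP hr /forallP hd.
rewrite inE; apply/and3P; split.
- apply/andP; split; apply/forallP.
    move=> S; apply/implyP; rewrite !inE => /orP [/andP [_ SG]|/imsetP [j _ ->]].
      by move: (hr S); rewrite SG.
    by rewrite card_gcol.
  by move=> w; rewrite deg_sw; apply: hd.
- apply/subsetP=> S SH; rewrite !inE; apply/orP; left.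
  rewrite (subsetP HG S SH) andbT; apply/negP => /orP [/eqP E|/imsetP [i _ E]].
    by move: eH; rewrite -E SH.
  by move: (row_H i); rewrite -E SH.
- apply: disj_of => S SH'; rewrite !inE => /orP [/andP [_ SG]|/imsetP [j _ E]].
    by apply: (disj_mem H'G SH' SG).
  by move: (gcol_notH' j); rewrite -E SH'.
Qed.

Lemma e_notin_sw : e \notin sw G c.
Proof.
rewrite !inE negb_or; apply/andP; split.
  by rewrite eqxx.
by apply/negP => eA; apply: (disj_mem Add_disj eA eG).
Qed.

Lemma sw_recover : (sw G c :\: Add c) :|: Rem c = G.
Proof.
apply/setP=> S; rewrite in_setU in_setD /sw in_setU in_setD.
case SR: (S \in Rem c).
  by rewrite orbT; move/subsetP: Rem_sub => /(_ S SR) ->.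
rewrite /= orbF; case SA: (S \in Add c); rewrite //= ?andbT ?orbF //.
apply/esym/negP => SG; apply: (disj_mem Add_disj SA SG).
Qed.

Definition colf j : {ffun 'I_m -> 'I_n} := [ffun i => c i j].

End Switch.

Definition Col n m (v : {ffun 'I_m.+1 -> 'I_n}) (G' : {set {set 'I_n}}) j :=
  [set f : {ffun 'I_m -> 'I_n} | [&& injectiveb f, v j \notin im f & v j |: im f \in G']].

Lemma col_back n m d (H H' : {set {set 'I_n}}) (e : {set 'I_n}) (v : {ffun 'I_m.+1 -> 'I_n}) G (c : {ffun 'I_m -> {ffun 'I_m.+1 -> 'I_n}}) : injective v -> im v = e -> e \notin H ->
  G \in GndHH m.+1 d H H' -> e \in G -> valid H H' e v G c ->
  forall j, colf c j \in Col v (sw e v G c) j.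
Proof.
move=> vinj ev eH GA eG vc j.
have imc : im (colf c j) = [set c i j | i : 'I_m].
  by apply/setP=> w; apply/imsetP/imsetP => [[i _ ->]|[i _ ->]]; exists i => //; rewrite ffunE.
rewrite inE imc; apply/and3P; split.
- by apply/injectiveP => i i'; rewrite !ffunE => /(entry_eq vc) [].
- by apply/negP => /imsetP [i _ h]; move: (entry_e vc i j); rewrite -h (v_in_e ev).
- by rewrite !inE; apply/orP; right; apply/imsetP; exists j.
Qed.


Lemma prod1 (I : finType) (a : I -> nat) i p : (forall k, k != i -> a k <= p) ->
  \prod_k a k <= a i * p ^ #|I|.-1.
Proof.
move=> h; rewrite (bigD1 i) //= leq_mul2l; apply/orP; right.
rewrite -(cardC1 i) -prod_nat_const.
rewrite [X in _ <= X](eq_bigl (fun k => k != i)); last by move=> k; rewrite !inE.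
apply: leq_prod => k; exact: h.
Qed.

Lemma prod2 (I : finType) (a : I -> nat) i i' p : i != i' ->
  (forall k, k != i -> k != i' -> a k <= p) ->
  \prod_k a k <= a i * a i' * p ^ (#|I| - 2).
Proof.
move=> ii h; rewrite (bigD1 i) //= (bigD1 i') /=; last by rewrite eq_sym.
rewrite mulnA leq_mul2l; apply/orP; right.
have -> : (#|I| - 2 = #|[pred k | (k != i') && (k != i)]|)%N.
  have := cardD1 i' (predC1 i); rewrite !inE eq_sym ii /= cardC1 => E.
  have E2 : #|[predD1 predC1 i & i']| = #|[pred k | (k != i') && (k != i)]|.
    by apply: eq_card => k; rewrite !inE.
  rewrite -E2; move: E; case: #|I| => [|q] //= ->; rewrite add1n subn2 //.
rewrite -prod_nat_const.
rewrite [X in _ <= X](eq_bigl (fun k => (k != i) && (k != i'))); last by move=> k; rewrite !inE andbC.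
apply: leq_prod => k /andP [k1 k2]; exact: h.
Qed.

Lemma sum_exch (T1 T2 : finType) (X : {set T1}) (P : T1 -> T2 -> bool) :
  \sum_(x in X) #|[set y | P x y]| = \sum_y #|[set x in X | P x y]|.
Proof.
have E1 : forall x, #|[set y | P x y]| = \sum_y (P x y : nat).
  by move=> x; rewrite -sum1_card big_mkcond /=; apply: eq_bigr => y _; rewrite inE.
have E2 : forall y, #|[set x in X | P x y]| = \sum_(x in X) (P x y : nat).
  move=> y; rewrite -sum1_card big_mkcond /= [RHS]big_mkcond /=.
  by apply: eq_bigr => x _; rewrite !inE; case: (x \in X).
rewrite (eq_bigr _ (fun x _ => E1 x)) (eq_bigr _ (fun y _ => E2 y)).
exact: exchange_big.
Qed.

Section Count.
Variables (n m d : nat) (H H' : {set {set 'I_n}}) (e : {set 'I_n}) (v : {ffun 'I_m.+1 -> 'I_n}).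
Hypothesis vinj : injective v.
Hypothesis ev : im v = e.
Hypothesis eH : e \notin H.

Definition Back (G' : {set {set 'I_n}}) :=
  [set c : {ffun 'I_m -> {ffun 'I_m.+1 -> 'I_n}} | [forall j, colf c j \in Col v G' j]].

Lemma card_Col G' j : #|Col v G' j| <= deg G' (v j) * m`!.
Proof.
set K := [set S :\ v j | S in [set S in G' | v j \in S]].
apply: (@leq_trans #|[set f : {ffun 'I_m -> 'I_n} | injectiveb f && (im f \in K)]|).
  apply: subset_leq_card; apply/subsetP => f; rewrite !inE => /and3P [fi vf fG].
  rewrite fi /=; apply/imsetP; exists (v j |: im f); first by rewrite inE fG setU11.
  by rewrite setU1K.
apply: leq_trans (card_inj_le _ _) _; rewrite leq_mul2r; apply/orP; right.
exact: leq_imset_card.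
Qed.

Lemma card_Back G' : #|Back G'| <= \prod_j #|Col v G' j|.
Proof.
pose tr (c : {ffun 'I_m -> {ffun 'I_m.+1 -> 'I_n}}) : {ffun 'I_m.+1 -> {ffun 'I_m -> 'I_n}} :=
  [ffun j => colf c j].
have trI : injective tr.
  move=> c1 c2 E; apply/ffunP => i; apply/ffunP => j.
  by move/ffunP: E => /(_ j); rewrite !ffunE => /ffunP /(_ i); rewrite !ffunE.
rewrite -card_fam -(card_imset _ trI); apply: subset_leq_card; apply/subsetP => t.
case/imsetP => c; rewrite !inE => /forallP h ->; apply/forallP => j; rewrite ffunE; exact: h.
Qed.

Lemma back_bound G' : regular_rgraph m.+1 d G' -> #|Back G'| <= (d * m`!) ^ m.+1.
Proof.
case/andP=> _ /forallP hd.
apply: leq_trans (card_Back G') _.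
have -> : (d * m`!) ^ m.+1 = \prod_(j : 'I_m.+1) (d * m`!) by rewrite prod_nat_const card_ord.
apply: leq_prod => j _.
by apply: leq_trans (card_Col G' j) _; rewrite (eqP (hd _)).
Qed.

Definition Aset := [set G in GndHH m.+1 d H H' | e \in G].
Definition Bset := [set G in GndHH m.+1 d H H' | e \notin G].

Lemma double_count :
  \sum_(G in Aset) #|[set c | valid H H' e v G c]| <= #|Bset| * (d * m`!) ^ m.+1.
Proof.
rewrite sum_exch.
apply: (@leq_trans (\sum_c #|[set G' in Bset | c \in Back G']|)).
  apply: leq_sum => c _.
  set X := [set G in Aset | valid H H' e v G c].
  rewrite -(@card_in_imset _ _ (fun G => sw e v G c) X); last first.
    move=> G1 G2; rewrite !inE => /andP [/andP [_ e1] v1] /andP [/andP [_ e2] v2] E.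
    by rewrite -(sw_recover e1 v1) -(sw_recover e2 v2) E.
  apply: subset_leq_card; apply/subsetP => G' /imsetP [G]; rewrite !inE.
  move=> /andP [/andP [GA eG] vc] ->.
  have {}GA : G \in GndHH m.+1 d H H' by rewrite inE.
  have := sw_in vinj ev eH GA eG vc; rewrite inE => ->.
  rewrite (e_notin_sw eG vc) /=.
  by apply/forallP => j; apply: (col_back vinj ev eH GA eG vc).
rewrite -(sum_exch Bset (fun G' c => c \in Back G')).
rewrite -sum_nat_const; apply: leq_sum => G'; rewrite inE => /andP [G'G _].
have -> : #|[set y | y \in Back G']| = #|Back G'| by apply: eq_card => c; rewrite inE.
by apply: back_bound; move: G'G; rewrite inE => /and3P [].
Qed.

End Count.

Lemma not_disj (T : finType) (A B : {set T}) : ~~ [disjoint A & B] -> exists2 x, x \in A & x \in B.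
Proof. by rewrite -setI_eq0 => /set0Pn [x]; rewrite inE => /andP [a b]; exists x. Qed.

Lemma leq_sum_const (I : finType) (P : pred I) (F : I -> nat) k :
  (forall i, P i -> F i <= k) -> \sum_(i | P i) F i <= #|P| * k.
Proof.
move=> h; rewrite -sum_nat_const; exact: leq_sum.
Qed.

Section Fwd.
Variables (n m d : nat) (H H' : {set {set 'I_n}}) (e : {set 'I_n}) (v : {ffun 'I_m.+1 -> 'I_n}).
Hypothesis vinj : injective v.
Hypothesis ev : im v = e.
Variable G : {set {set 'I_n}}.
Hypothesis GA : G \in GndHH m.+1 d H H'.

Local Notation R := (Rg m G).
Local Notation rf := (m.+1)`!.
Local Notation rho := (n * d * m`!).

Lemma Greg : regular_rgraph m.+1 d G.
Proof. by move: GA; rewrite inE => /and3P []. Qed.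

Lemma Gsize S : S \in G -> #|S| = m.+1.
Proof. by case/andP: Greg => /forallP h _ SG; move: (h S); rewrite SG => /eqP. Qed.

Lemma Gdeg w : deg G w = d.
Proof. by case/andP: Greg => _ /forallP h; apply/eqP. Qed.

Lemma card_R : #|R| = rho.
Proof.
rewrite /Rg card_inj_exact; last exact: Gsize.
by rewrite factS mulnA (regular_card Greg).
Qed.

Definition Rw w := [set f in R | w \in im f].

Lemma card_Rw w : #|Rw w| <= d * rf.
Proof.
apply: (@leq_trans #|[set f : {ffun 'I_m.+1 -> 'I_n} | injectiveb f && (im f \in [set S in G | w \in S])]|).
  apply: subset_leq_card; apply/subsetP => f; rewrite !inE => /andP [/andP [fi fG] wf].
  by rewrite fi fG wf.
by apply: leq_trans (card_inj_le _ _) _; rewrite -(Gdeg w).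
Qed.

Lemma card_e : #|e| = m.+1.
Proof. by rewrite -ev /im card_imset // card_ord. Qed.

Definition Y1 := [set f in R | (im f \in H) || ~~ [disjoint im f & e]].

Lemma card_Y1 : #|Y1| <= #|H| * rf + m.+1 * (d * rf).
Proof.
apply: (@leq_trans #|[set f : {ffun 'I_m.+1 -> 'I_n} | injectiveb f && (im f \in H)] :|: \bigcup_(w in e) Rw w|).
  apply: subset_leq_card; apply/subsetP => f; rewrite !inE => /andP [/andP [fi fG] /orP [fH|]].
    by rewrite fi fH.
  case/not_disj => w wf we; apply/orP; right; apply/bigcupP; exists w => //.
  by rewrite !inE fi fG wf.
rewrite cardsU; apply: leq_trans (leq_subr _ _) _; apply: leq_add; first exact: card_inj_le.
apply: leq_trans (card_bigcup_le _ _) _.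
apply: leq_trans (leq_sum_const (k := d * rf) (fun w _ => card_Rw w)) _.
by rewrite card_e.
Qed.


Definition FR := fam (fun _ : 'I_m => R).

Lemma card_FR : #|FR| = rho ^ m.
Proof. by rewrite card_fam card_R prod_nat_const card_ord. Qed.

Definition B1 i := [set c in FR | (rowset c i \in H) || ~~ [disjoint rowset c i & e]].

Lemma card_B1 i : #|B1 i| <= (#|H| * rf + m.+1 * (d * rf)) * rho ^ m.-1.
Proof.
apply: (@leq_trans #|fam (fun k => if k == i then Y1 else R)|).
  apply: subset_leq_card; apply/subsetP => c; rewrite !inE => /andP [/forallP cF hc].
  apply/forallP => k; case: eqP => [->|_]; last exact: cF.
  by rewrite /Y1 inE cF.
rewrite card_fam; apply: leq_trans (prod1 (a := fun k => #|if k == i then Y1 else R|) (i := i) (p := rho) _) _.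
  by move=> k /negbTE ->; rewrite card_R.
by rewrite eqxx card_ord leq_mul2r card_Y1 orbT.
Qed.

Definition B2 i i' := [set c in FR | ~~ [disjoint rowset c i & rowset c i']].

Lemma card_B2 i i' : i != i' -> #|B2 i i'| <= n * ((d * rf) * (d * rf) * rho ^ (m - 2)).
Proof.
move=> ii.
apply: (@leq_trans #|\bigcup_(w : 'I_n) fam (fun k => if (k == i) || (k == i') then Rw w else R)|).
  apply: subset_leq_card; apply/subsetP => c; rewrite !inE => /andP [/forallP cF].
  case/not_disj => w w1 w2; apply/bigcupP; exists w => //.
  rewrite inE; apply/forallP => k; case: (eqVneq k i) => [->|ki] /=.
    by rewrite /Rw inE cF.
  case: (eqVneq k i') => [->|ki'] /=; last exact: cF.
  by rewrite /Rw inE cF.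
apply: leq_trans (card_bigcup_le _ _) _.
rewrite -[n in n * _]card_ord; apply: leq_sum_const => w _.
rewrite card_fam.
apply: leq_trans (prod2 (a := fun k => #|if (k == i) || (k == i') then Rw w else R|) (p := rho) ii _) _.
  by move=> k /negbTE -> /negbTE ->; rewrite card_R.
rewrite /= eqxx eq_refl orbT card_ord leq_mul2r; apply/orP; right.
by apply: leq_mul; apply: card_Rw.
Qed.

Lemma card_B3_aux (S : {set 'I_n}) j : #|S| <= m.+1 -> #|[set f in R | f j \in S]| <= m.+1 * (d * rf).
Proof.
move=> hS.
apply: (@leq_trans #|\bigcup_(w in S) Rw w|).
  apply: subset_leq_card; apply/subsetP => f; rewrite !inE => /andP [fR fS].
  by apply/bigcupP; exists (f j) => //; rewrite !inE fR; apply/imsetP; exists j.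
apply: leq_trans (card_bigcup_le _ _) _.
apply: leq_trans (leq_sum_const (k := d * rf) (fun w _ => card_Rw w)) _.
by rewrite leq_mul2r hS orbT.
Qed.

Definition B3 j := [set c in FR | gcol v c j \in G :|: H'].

Lemma card_B3 j : #|B3 j| <= (d + maxdeg H') * (m.+1 * (d * rf)) ^ m.
Proof.
set K := [set S in G :|: H' | (v j \in S) && (#|S| <= m.+1)].
apply: (@leq_trans #|\bigcup_(S in K) fam (fun _ : 'I_m => [set f in R | f j \in S])|).
  apply: subset_leq_card; apply/subsetP => c; rewrite !inE => /andP [/forallP cF cG].
  apply/bigcupP; exists (gcol v c j).
    rewrite /K inE in_setU cG /= /gcol setU11 /=.
    rewrite cardsU1 -[X in _ <= X]add1n; apply: leq_add; first by case: (_ \notin _).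
    by apply: leq_trans (leq_imset_card _ _) _; rewrite card_ord.
  rewrite inE; apply/forallP => i; rewrite in_set cF /= /gcol in_setU1; apply/orP; right.
  by apply/imsetP; exists i.
apply: leq_trans (card_bigcup_le _ _) _.
have cK : #|K| <= d + maxdeg H'.
  apply: (@leq_trans #|[set S in G | v j \in S] :|: [set S in H' | v j \in S]|).
    apply: subset_leq_card; apply/subsetP => S; rewrite !inE => /andP [/orP [h|h] /andP [h2 _]];
    by rewrite h h2 ?orbT.
  rewrite cardsU; apply: leq_trans (leq_subr _ _) _; apply: leq_add.
    by rewrite -/(deg G (v j)) Gdeg.
  rewrite -/(deg H' (v j)); exact: (leq_bigmax (F := fun w => deg H' w)).
apply: leq_trans (leq_sum_const (k := (m.+1 * (d * rf)) ^ m) _) _.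
  move=> S; rewrite inE => /andP [_ /andP [_ hS]].
  rewrite card_fam; have -> : (m.+1 * (d * rf)) ^ m = \prod_(i : 'I_m) (m.+1 * (d * rf)) by rewrite prod_nat_const card_ord.
  apply: leq_prod => i _.
  exact: card_B3_aux.
by rewrite leq_mul2r cK orbT.
Qed.


Definition Bad := m * ((#|H| * rf + m.+1 * (d * rf)) * rho ^ m.-1) +
  (m * (m.-1 * (n * ((d * rf) * (d * rf) * rho ^ (m - 2)))) +
   m.+1 * ((d + maxdeg H') * (m.+1 * (d * rf)) ^ m)).

Lemma forward : rho ^ m <= #|[set c | valid H H' e v G c]| + Bad.
Proof.
rewrite -card_FR.
have sub : FR \subset [set c | valid H H' e v G c] :|: ((\bigcup_i B1 i) :|:
   ((\bigcup_i \bigcup_(i' | i' != i) B2 i i') :|: \bigcup_j B3 j)).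
  apply/subsetP => c cF; move: (cF); rewrite inE => /forallP cR.
  case V: (valid H H' e v G c); first by rewrite in_setU inE V.
  rewrite in_setU inE V /=.
  move: V; rewrite /valid => /negbT /nandP [/nandP [|]|].
  - move/forallPn => [i]; rewrite cR /= => hi.
    rewrite in_setU; apply/orP; left; apply/bigcupP; exists i => //; rewrite /B1 inE cF /=.
    by move: hi; rewrite negb_and negbK.
  - move/forallPn => [i /forallPn [i' hii']]; move: hii'; rewrite negb_imply => /andP [ii dj].
    rewrite !in_setU; apply/orP; right; apply/orP; left; apply/bigcupP; exists i => //.
    by apply/bigcupP; exists i'; [rewrite eq_sym | rewrite /B2 inE cF].
  - move/forallPn => [j]; rewrite negbK => hj.
    rewrite !in_setU; apply/orP; right; apply/orP; right; apply/bigcupP; exists j => //.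
    by rewrite /B3 inE cF.
apply: leq_trans (subset_leq_card sub) _.
have U : forall T : finType, forall X Y : {set T}, #|X :|: Y| <= #|X| + #|Y|.
  by move=> T X Y; rewrite cardsU leq_subr.
apply: leq_trans (U _ _ _) _; rewrite leq_add2l /Bad.
apply: leq_trans (U _ _ _) _; apply: leq_add.
  apply: leq_trans (card_bigcup_le _ _) _.
  rewrite -[m in m * _]card_ord; apply: leq_sum_const => i _; exact: card_B1.
apply: leq_trans (U _ _ _) _; apply: leq_add.
  apply: leq_trans (card_bigcup_le _ _) _.
  rewrite -[m in m * _]card_ord; apply: leq_sum_const => i _.
  apply: leq_trans (card_bigcup_le _ _) _.
  rewrite -[m in m.-1]card_ord -(cardC1 i) -sum_nat_const.
  rewrite [X in _ <= X](eq_bigl (fun k => k != i)); last by move=> k; rewrite !inE.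
  apply: leq_sum => k ki; apply: card_B2; by rewrite eq_sym.
apply: leq_trans (card_bigcup_le _ _) _.
rewrite -[X in X * ((d + _) * _)](card_ord m.+1); apply: leq_sum_const => j _; exact: card_B3.
Qed.

End Fwd.



Lemma exists_v n m (e : {set 'I_n}) : #|e| = m.+1 ->
  exists v : {ffun 'I_m.+1 -> 'I_n}, injective v /\ im v = e.
Proof.
move=> he.
exists [ffun j => enum_val (cast_ord (esym he) j)].
have vi : injective [ffun j => enum_val (cast_ord (esym he) j)].
  by move=> j1 j2; rewrite !ffunE => /enum_val_inj /cast_ord_inj.
split=> //; apply/eqP; rewrite eqEcard; apply/andP; split.
  by apply/subsetP=> x /imsetP [j _ ->]; rewrite ffunE; apply: enum_valP.
by rewrite /im card_imset // card_ord he.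
Qed.

Lemma comb n m d (H H' : {set {set 'I_n}}) (e : {set 'I_n}) : #|e| = m.+1 -> e \notin H ->
  #|Aset m d H H' e| * (n * d * m`!) ^ m <=
  #|Bset m d H H' e| * (d * m`!) ^ m.+1 + #|Aset m d H H' e| * Bad m d H H'.
Proof.
move=> he eH; case: (exists_v he) => v [vinj ev].
rewrite -sum_nat_const.
apply: (@leq_trans (\sum_(G in Aset m d H H' e) (#|[set c | valid H H' e v G c]| + Bad m d H H'))).
  apply: leq_sum => G; rewrite inE => /andP [GA _]; exact: (forward vinj ev GA).
rewrite big_split /= sum_nat_const leq_add2r.
exact: double_count.
Qed.

Lemma card_split n m d (H H' : {set {set 'I_n}}) (e : {set 'I_n}) :
  #|GndHH m.+1 d H H'| = #|Aset m d H H' e| + #|Bset m d H H' e|.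
Proof.
rewrite -(cardsID [set G : {set {set 'I_n}} | e \in G] (GndHH m.+1 d H H')).
by congr (_ + _); apply: eq_card => G; rewrite !inE // andbC.
Qed.

Import Order.TTheory GRing.Theory Num.Theory.
Local Open Scope ring_scope.

Lemma final_ineq (A B P Bm Bd q0 dl : rat) : 0 <= A -> 0 <= B -> 0 < P ->
  A * P <= B * Bm + A * Bd -> Bd = P * dl -> Bm = P * q0 -> 0 <= q0 -> 0 <= dl -> dl <= 1/2 ->
  A / (A + B) <= q0 * (1 + 2 * dl).
Proof.
move=> A0 B0 P0 h eBd eBm q00 d0 d1; subst Bd Bm.
have h1 : A * (1 - dl) <= B * q0.
  rewrite -(ler_pM2l P0); nra.
have hq : 0 <= q0 * (1 + 2 * dl) by apply: mulr_ge0 => //; lra.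
case: (eqVneq (A + B) 0) => [AB|AB].
  have -> : A = 0 by lra.
  by rewrite mul0r.
have ABp : 0 < A + B by rewrite lt_def AB /=; lra.
rewrite ler_pdivrMr //.
have h2 : 0 <= A * (dl * (1 - 2 * dl)) by apply: mulr_ge0 => //; apply: mulr_ge0 => //; lra.
have h3 : 0 <= (1 + 2 * dl) by lra.
have h4 : A * (1 - dl) * (1 + 2 * dl) <= B * q0 * (1 + 2 * dl) by apply: ler_wpM2r.
have h5 : 0 <= A * (q0 * (1 + 2 * dl)) by apply: mulr_ge0.
nra.
Qed.

Lemma t1 (n m1 d h : nat) : (0 < n)%N -> (0 < d)%N ->
  ((m1.+1 * ((h * (m1.+2)`! + m1.+2 * (d * (m1.+2)`!)) * (n * d * (m1.+1)`!) ^ m1))%N%:R : rat) =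
  ((n * d * (m1.+1)`!) ^ m1.+1)%N%:R *
   ((m1.+1)%:R * (m1.+2)%:R * (h%:R / (n%:R * d%:R)) + (m1.+1)%:R * ((m1.+2)%:R * (m1.+2)%:R) / n%:R).
Proof.
move=> n0 d0.
have nz : (n%:R : rat) != 0 by rewrite pnatr_eq0 -lt0n.
have dz : (d%:R : rat) != 0 by rewrite pnatr_eq0 -lt0n.
rewrite expnSr [(m1.+2)`!]factS.
set Q := (_ ^ m1)%N.
rewrite !natrM !natrD !natrM.
field.
by rewrite nz dz.
Qed.

Lemma t2 (n m d : nat) : (0 < n)%N -> (0 < d)%N ->
  ((m * (m.-1 * (n * ((d * (m.+1)`!) * (d * (m.+1)`!) * (n * d * m`!) ^ (m - 2)))))%N%:R : rat) =
  ((n * d * m`!) ^ m)%N%:R * ((m%:R * (m.-1)%:R * ((m.+1)%:R * (m.+1)%:R)) / n%:R).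
Proof.
move=> n0 d0.
have nz : (n%:R : rat) != 0 by rewrite pnatr_eq0 -lt0n.
have dz : (d%:R : rat) != 0 by rewrite pnatr_eq0 -lt0n.
case: m => [|[|m2]]; first by rewrite !mul0n !mul0r mulr0.
  by rewrite /= !mul0n !mul0r ?mulr0 ?mul0r.
rewrite /= subn2 /=.
rewrite !expnSr [(m2.+3)`!]factS.
set Q := (_ ^ m2)%N.
rewrite !natrM.
field.
by rewrite nz.
Qed.

Lemma t3 (n m d D : nat) : (0 < n)%N ->
  ((m.+1 * ((d + D) * (m.+1 * (d * (m.+1)`!)) ^ m))%N%:R : rat) =
  ((n * d * m`!) ^ m)%N%:R * ((m.+1)%:R ^+ (2 * m + 1) * ((d%:R + D%:R) / n%:R ^+ m)).
Proof.
move=> n0.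
have nz : (n%:R ^+ m : rat) != 0 by rewrite expf_neq0 // pnatr_eq0 -lt0n.
rewrite [(m.+1)`!]factS !expnMn !natrM !natrX natrD.
rewrite exprD expr1 mul2n -addnn exprD.
set a := (m.+1)%:R ^+ m.
field.
exact: nz.
Qed.

Lemma t1' (n m d h : nat) : (0 < n)%N -> (0 < d)%N -> (0 < m)%N ->
  ((m * ((h * (m.+1)`! + m.+1 * (d * (m.+1)`!)) * (n * d * m`!) ^ m.-1))%N%:R : rat) =
  ((n * d * m`!) ^ m)%N%:R *
   (m%:R * (m.+1)%:R * (h%:R / (n%:R * d%:R)) + m%:R * ((m.+1)%:R * (m.+1)%:R) / n%:R).
Proof. by case: m => // m1 n0 d0 _; exact: t1. Qed.

Lemma bm_eq (n m d : nat) : (0 < n)%N ->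
  (((d * m`!) ^ m.+1)%N%:R : rat) = ((n * d * m`!) ^ m)%N%:R * (m`!%:R * (d%:R / n%:R ^+ m)).
Proof.
move=> n0.
have nz : (n%:R ^+ m : rat) != 0 by rewrite expf_neq0 // pnatr_eq0 -lt0n.
rewrite !natrX !natrM exprS !exprMn.
field; exact: nz.
Qed.

Theorem lemma2p1 (r : nat) : (2 <= r)%N ->
  exists C : rat,
  forall (d : nat -> nat) (H H' : forall n : nat, {set {set 'I_n}}),
    (forall n, (0 < d n)%N) ->
    (forall n, (r %| n * d n)%N) ->
    (forall n, is_rgraph r (H n)) ->
    (forall n, is_rgraph r (H' n)) ->
    (forall n, [disjoint H n & H' n]) ->
    littleo (fun n => (d n)%:R) (fun n => n%:R ^+ (r - 1)) ->
    littleo (fun n => #|H n|%:R) (fun n => (n * d n)%:R) ->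
    littleo (fun n => (maxdeg (H' n))%:R) (fun n => n%:R ^+ (r - 1)) ->
    exists N : nat, forall n : nat, (N <= n)%N ->
      forall e : {set 'I_n}, #|e| = r -> e \notin H n -> e \notin H' n ->
        cond_prob r (d n) (H n) (H' n) e <=
          (r - 1)`!%:R * ((d n)%:R / n%:R ^+ (r - 1)) *
          (1 + C * (1 / n%:R + (d n)%:R / n%:R ^+ (r - 1)
                    + #|H n|%:R / (n * d n)%:R
                    + (maxdeg (H' n))%:R / n%:R ^+ (r - 1))).
Proof.
case: r => [|m] // r2; have m0 : (0 < m)%N := r2.
have -> : (m.+1 - 1 = m)%N by rewrite subn1.
set Kn : nat := (m * m.+1 + (m * (m.+1 * m.+1) + m * m.-1 * (m.+1 * m.+1)) + m.+1 ^ (2 * m + 1))%N.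
have Kpos : (0 < Kn)%N by rewrite /Kn addn_gt0 expn_gt0 /= orbT.
exists (2 * Kn%:R).
move=> d H H' dpos _ _ _ _ hd hH hD.
have KR : (0 : rat) < Kn%:R by rewrite ltr0n.
set eps0 : rat := (8 * Kn%:R)^-1.
have e0 : 0 < eps0 by rewrite invr_gt0; apply: mulr_gt0 => //; lra.
case: (hd eps0 e0) => N1 h1; case: (hH eps0 e0) => N2 h2; case: (hD eps0 e0) => N3 h3.
exists (N1 + N2 + N3 + 8 * Kn).+1 => n hn e he eH eH'.
have {h1}h1 := h1 n ltac:(lia).
have {h2}h2 := h2 n ltac:(lia).
have {h3}h3 := h3 n ltac:(lia).
have npos : (0 < n)%N by lia.
have n8 : (8 * Kn <= n)%N by lia.
have dp := dpos n.
have := @comb n m (d n) (H n) (H' n) e he eH.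
have := @card_split n m (d n) (H n) (H' n) e.
rewrite /cond_prob.
have -> : #|[set G in GndHH m.+1 (d n) (H n) (H' n) | e \in G]| = #|Aset m (d n) (H n) (H' n) e| by [].
move=> -> CN.
set A := #|Aset _ _ _ _ _| in CN *; set B := #|Bset _ _ _ _ _| in CN *.
set h := #|H n| in h2 CN *; set D := maxdeg (H' n) in h3 CN *; set dd := d n in h1 h2 dp CN *.
set NR : rat := n%:R; set DR : rat := dd%:R; set hR : rat := h%:R; set DDR : rat := D%:R.
have NR0 : 0 < NR by rewrite ltr0n.
have DR0 : 0 < DR by rewrite ltr0n.
have NmR0 : 0 < NR ^+ m by rewrite exprn_gt0.
set dl : rat := m%:R * (m.+1)%:R * (hR / (NR * DR)) + m%:R * ((m.+1)%:R * (m.+1)%:R) / NR +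
   (m%:R * (m.-1)%:R * ((m.+1)%:R * (m.+1)%:R)) / NR + (m.+1)%:R ^+ (2 * m + 1) * ((DR + DDR) / NR ^+ m).
set q0 : rat := m`!%:R * (DR / NR ^+ m).
have hBd : (Bad m dd (H n) (H' n))%:R = ((n * dd * m`!) ^ m)%N%:R * dl.
  rewrite /Bad natrD natrD (@t1' n m dd h npos dp m0) (@t2 n m dd npos dp) (@t3 n m dd D npos).
  by rewrite /dl; ring.
have hBm := @bm_eq n m dd npos.
have CQ : (A%:R : rat) * ((n * dd * m`!) ^ m)%N%:R <=
          B%:R * ((dd * m`!) ^ m.+1)%N%:R + A%:R * (Bad m dd (H n) (H' n))%:R.
  by rewrite -!natrM -natrD ler_nat.
have x1 : 0 <= hR / (NR * DR) by apply: divr_ge0 => //; apply: mulr_ge0; lra.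
have x2 : 0 <= 1 / NR by apply: divr_ge0 => //; lra.
have x3 : 0 <= DR / NR ^+ m by apply: divr_ge0; lra.
have x4 : 0 <= DDR / NR ^+ m by apply: divr_ge0 => //; lra.
set a : rat := m%:R * (m.+1)%:R.
set b : rat := m%:R * ((m.+1)%:R * (m.+1)%:R) + m%:R * (m.-1)%:R * ((m.+1)%:R * (m.+1)%:R).
set c : rat := (m.+1)%:R ^+ (2 * m + 1).
have a0 : 0 <= a by rewrite /a -natrM ler0n.
have b0 : 0 <= b by rewrite /b -!natrM -natrD ler0n.
have c0 : 0 <= c by rewrite /c -natrX ler0n.
have KE : (Kn%:R : rat) = a + b + c by rewrite /Kn /a /b /c !natrD !natrM natrX.
set eps : rat := 1 / NR + DR / NR ^+ m + hR / (n * dd)%N%:R + DDR / NR ^+ m.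
have hnd : (n * dd)%N%:R = NR * DR by rewrite natrM.
have dlE : dl = a * (hR / (NR * DR)) + b * (1 / NR) + c * (DR / NR ^+ m) + c * (DDR / NR ^+ m).
  rewrite /dl /a /b /c.
  have -> : (DR + DDR) / NR ^+ m = DR / NR ^+ m + DDR / NR ^+ m by rewrite mulrDl.
  have -> : forall x : rat, x / NR = x * (1 / NR) by move=> x; rewrite mul1r.
  ring.
have dl0 : 0 <= dl.
  rewrite dlE; repeat apply: addr_ge0; apply: mulr_ge0 => //.
have dlK : dl <= Kn%:R * eps.
  rewrite dlE KE /eps hnd.
  have p1 : 0 <= b * (hR / (NR * DR)) by apply: mulr_ge0.
  have p2 : 0 <= c * (hR / (NR * DR)) by apply: mulr_ge0.
  have p3 : 0 <= a * (1 / NR) by apply: mulr_ge0.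
  have p4 : 0 <= c * (1 / NR) by apply: mulr_ge0.
  have p5 : 0 <= a * (DR / NR ^+ m) by apply: mulr_ge0.
  have p6 : 0 <= b * (DR / NR ^+ m) by apply: mulr_ge0.
  have p7 : 0 <= a * (DDR / NR ^+ m) by apply: mulr_ge0.
  have p8 : 0 <= b * (DDR / NR ^+ m) by apply: mulr_ge0.
  have p9 : 0 <= c * (DR / NR ^+ m) by apply: mulr_ge0.
  have p10 : 0 <= c * (DDR / NR ^+ m) by apply: mulr_ge0.
  nra.
have epsb : eps <= 4 * eps0.
  have y1 : 1 / NR <= eps0.
    rewrite /eps0 div1r lef_pV2 ?posrE //; last by apply: mulr_gt0 => //; lra.
    by rewrite /NR -(natrM rat 8 Kn) ler_nat.
  have y2 : DR / NR ^+ m <= eps0 by rewrite ler_pdivrMr.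
  have y3 : hR / (n * dd)%N%:R <= eps0.
    by rewrite ler_pdivrMr // hnd; apply: mulr_gt0.
  have y4 : DDR / NR ^+ m <= eps0 by rewrite ler_pdivrMr.
  rewrite /eps; lra.
have dlh : dl <= 1 / 2.
  apply: (le_trans dlK); apply: (le_trans (ler_wpM2l (ltW KR) epsb)).
  have -> : (Kn%:R : rat) * (4 * eps0) = 1 / 2 by rewrite /eps0; field; rewrite gt_eqF.
  by [].
rewrite natrD.
have P0 : (0 : rat) < ((n * dd * m`!) ^ m)%N%:R.
  by rewrite ltr0n expn_gt0 !muln_gt0 npos dp fact_gt0.
have q00 : 0 <= q0 by apply: mulr_ge0; [rewrite ler0n| apply: divr_ge0; lra].
apply: le_trans (final_ineq (ler0n _ A) (ler0n _ B) P0 CQ hBd hBm q00 dl0 dlh) _.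
rewrite ler_wpM2l //.
rewrite lerD2l -mulrA ler_wpM2l //.
Qed.
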